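(* Let $1\le r\le 8$, let $k$ be a positive integer, let $D\in|k(3H-E_1-\dots-E_r)|$ be an effective divisor on $\mathbb{S}_r$ and let $Q\in\mathbb{S}_r$. Write $f(D)$ for the image plane curve (of degree $3k$). If $Q\in E_1\cup\dots\cup E_r$, then $$\mathrm{mult}_Q(D)\le 2\,\mathrm{mult}_{f(Q)}(f(D))-k.$$ If $Q\notin E_1\cup\dots\cup E_r$, then $$\mathrm{mult}_Q(D)=\mathrm{mult}_{f(Q)}(f(D))\le 3k,$$ and if equality $\mathrm{mult}_Q(D)=3k$ holds, then $f(D)$ is a union of lines through $f(Q)$.
   Context: Let $P_1,\dots,P_r\in\mathbb{P}^2(\mathbb{C})$ be $r$ general points and $f\colon\mathbb{S}_r\to\mathbb{P}^2$ the blow-up at them, with exceptional curves $E_i=f^{-1}(P_i)$; $H$ is the pullback of the class of a line. For a divisor $D\in|k(3H-E_1-\dots-E_r)|$, $f(D)$ denotes the plane curve $f_*D$ of degree $3k$, so that $D=f^*(f(D))-kE_1-\dots-kE_r$. *)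

(* Defs.v *)
From HB Require Import structures.
From mathcomp Require Import all_boot all_order all_algebra.
From mathcomp Require Import mpoly.
From mathcomp Require Import complex.
From mathcomp Require Import reals.
Set Implicit Arguments. Unset Strict Implicit. Unset Printing Implicit Defensive.
Import Order.TTheory GRing.Theory Num.Theory.
Local Open Scope ring_scope.

Section Mult.
Variable F : fieldType.

(* Order of vanishing at the origin of a polynomial in n variables: the least
   total degree of a monomial occurring in p (0 for p = 0). *)
Definition mord0 n (p : {mpoly F[n]}) : nat :=
  \big[minn/msize p]_(m <- msupp p) mdeg m.

Definition homog3 (d : nat) (G : {mpoly F[3]}) : bool :=
  all [pred m | mdeg m == d] (msupp G).

(* Multiplicity of the plane curve V(G) at the point [q] of P^2 (q a nonzero
   vector of F^3): order at the origin of G(q + X), i.e. multiplicity of the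
   affine cone V(G) in F^3 at q. *)
Definition pmult (G : {mpoly F[3]}) (q : 'rV[F]_3) : nat :=
  mord0 (G \mPo [tuple (q 0 i)%:MP + 'X_i | i < 3]).

(* Local parametrisation of P^2 near [q], given a basis (q, w, w') of F^3:
   (s, t) |-> [q + s w + t w'].  Local equation of V(G) in this chart. *)
Definition chart_eq (G : {mpoly F[3]}) (q w w' : 'rV[F]_3) : {mpoly F[2]} :=
  G \mPo [tuple (q 0 i)%:MP + 'X_(@ord0 1) * (w 0 i)%:MP
                 + 'X_(@ord_max 1) * (w' 0 i)%:MP | i < 3].

(* Chart of the blow-up of P^2 at [p] (basis (p, w, w')):
   (u, v) |-> [p + u w + u v w']; the exceptional curve is u = 0 and the
   origin (u, v) = (0, 0) is the point of the exceptional curve corresponding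
   to the tangent direction w at [p].  Local equation of the total transform. *)
Definition blowup_eq (G : {mpoly F[3]}) (p w w' : 'rV[F]_3) : {mpoly F[2]} :=
  G \mPo [tuple (p 0 i)%:MP + 'X_(@ord0 1) * (w 0 i)%:MP
                 + 'X_(@ord0 1) * 'X_(@ord_max 1) * (w' 0 i)%:MP | i < 3].

(* Multiplicity of D = f^* V(G) - k E_1 - ... - k E_r at a point Q not on any
   exceptional curve, with f(Q) = [q], computed in the chart above. *)
Definition multD_off (G : {mpoly F[3]}) (q w w' : 'rV[F]_3) : nat :=
  mord0 (chart_eq G q w w').

(* Multiplicity of D = f^* V(G) - k E_1 - ... - k E_r at the point Q of E_i
   given by the tangent direction w at P_i = [p]: in the blow-up chart the
   local equation of D is blowup_eq G p w w' / u^k, whose order at the origin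
   is (order of blowup_eq) - k  (as an integer). *)
Definition multD_exc (k : nat) (G : {mpoly F[3]}) (p w w' : 'rV[F]_3) : int :=
  (mord0 (blowup_eq G p w w'))%:Z - k%:Z.

Definition linform (a : 'rV[F]_3) : {mpoly F[3]} := \sum_(i < 3) a 0 i *: 'X_i.

Definition union_of_lines_through (G : {mpoly F[3]}) (q : 'rV[F]_3) : Prop :=
  exists (c : F) (s : seq 'rV[F]_3),
    {in s, forall a : 'rV[F]_3, a != 0 /\ \sum_(i < 3) a 0 i * q 0 i = 0} /\
    G = c *: \prod_(a <- s) linform a.

End Mult.

(* Main.v *)
Require Import Defs.
From HB Require Import structures.
From mathcomp Require Import all_boot all_order all_algebra.
From mathcomp Require Import mpoly complex reals.
From mathcomp Require Import ring zify.
Set Implicit Arguments. Unset Strict Implicit. Unset Printing Implicit Defensive.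
Import Order.TTheory GRing.Theory Num.Theory.
Local Open Scope ring_scope.


Section Gen.
Variable F : fieldType.

Definition dP n (P : pred nat) (p : {mpoly F[n]}) := forall m, p@_m != 0 -> P (mdeg m).
Arguments dP {n}.

Section N.
Variable n : nat.
Implicit Types p q : {mpoly F[n]}.

Lemma dP0 P : dP P (0 : {mpoly F[n]}).
Proof. by move=> m; rewrite mcoeff0 eqxx. Qed.

Lemma dPD P p q : dP P p -> dP P q -> dP P (p + q).
Proof.
move=> hp hq m; rewrite mcoeffD; have [e|ne] := eqVneq p@_m 0.
  by rewrite e add0r; exact: hq.
by move=> _; exact: hp.
Qed.

Lemma dPN P p : dP P p -> dP P (- p).
Proof. by move=> hp m; rewrite mcoeffN oppr_eq0; exact: hp. Qed.

Lemma dPB P p q : dP P p -> dP P q -> dP P (p - q).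
Proof. by move=> hp hq; apply: dPD hp (dPN hq). Qed.

Lemma dPZ P c p : dP P p -> dP P (c *: p).
Proof.
move=> hp m; rewrite mcoeffZ => h; apply: hp.
by apply: contraNneq h => ->; rewrite mulr0.
Qed.

Lemma dP_sum P (I : Type) (r : seq I) (Pr : pred I) (f : I -> {mpoly F[n]}) :
  (forall i, Pr i -> dP P (f i)) -> dP P (\sum_(i <- r | Pr i) f i).
Proof. by move=> h; apply: big_ind => //; [exact: dP0 | exact: dPD]. Qed.

Lemma dPM (P Q S : pred nat) p q : dP P p -> dP Q q ->
  (forall a b, P a -> Q b -> S (a + b)%N) -> dP S (p * q).
Proof.
move=> hp hq hS m; rewrite mcoeffM => nz.
case hSm: (S (mdeg m)) => //; exfalso; move: nz; rewrite big1 ?eqxx // => kk /eqP Em.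
have [->|h1] := eqVneq (p@_kk.1) 0; first by rewrite mul0r.
have [->|h2] := eqVneq (q@_kk.2) 0; first by rewrite mulr0.
by move: (hS _ _ (hp _ h1) (hq _ h2)); rewrite -mdegD -Em hSm.
Qed.

Definition ge N (p : {mpoly F[n]}) := dP (fun a => N <= a)%N p.
Definition le N (p : {mpoly F[n]}) := dP (fun a => a <= N)%N p.

Lemma geM a b p q : ge a p -> ge b q -> ge (a + b) (p * q).
Proof. by move=> hp hq; apply: (dPM hp hq) => x y /= h1 h2; apply: leq_add. Qed.
Lemma leM a b p q : le a p -> le b q -> le (a + b) (p * q).
Proof. by move=> hp hq; apply: (dPM hp hq) => x y /= h1 h2; apply: leq_add. Qed.
Lemma ge0 p : ge 0 p. Proof. by []. Qed.
Lemma geW a b p : ge a p -> (b <= a)%N -> ge b p.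
Proof. by move=> h hb m /h; apply: leq_trans. Qed.
Lemma leW a b p : le a p -> (a <= b)%N -> le b p.
Proof. by move=> h hb m /h /leq_trans; apply. Qed.
Lemma geMl N p q : ge N q -> ge N (p * q).
Proof. by move=> h; have := geM (ge0 (p:=p)) h. Qed.
Lemma geMr N p q : ge N p -> ge N (p * q).
Proof. by move=> h; rewrite mulrC; apply: geMl. Qed.
Lemma geXm m : ge (mdeg m) 'X_[m].
Proof. by move=> k; rewrite -mcoeff_msupp msuppX mem_seq1 => /eqP ->. Qed.
Lemma leXm m : le (mdeg m) 'X_[m].
Proof. by move=> k; rewrite -mcoeff_msupp msuppX mem_seq1 => /eqP ->. Qed.
Lemma geX i : ge 1 'X_i.
Proof. by have := geXm (m:=U_(i)%MM); rewrite mdeg1. Qed.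
Lemma leX i : le 1 'X_i.
Proof. by have := leXm (m:=U_(i)%MM); rewrite mdeg1. Qed.
Lemma leC c : le 0 c%:MP.
Proof.
move=> m; rewrite -mcoeff_msupp msuppC; case: (c == 0) => //.
by rewrite mem_seq1 => /eqP ->; rewrite mdeg0.
Qed.
Lemma geXn a p k : ge a p -> ge (a * k) (p ^+ k).
Proof.
move=> h; elim: k => [|k IH]; first by rewrite muln0.
by rewrite exprS mulnS; apply: geM.
Qed.
Lemma leXn a p k : le a p -> le (a * k) (p ^+ k).
Proof.
move=> h; elim: k => [|k IH]; first by rewrite muln0 expr0 -mpolyC1; apply: leC.
by rewrite exprS mulnS; apply: leM.
Qed.
End N.
Arguments ge {n}.
Arguments le {n}.

Section Comp.
Variables n k : nat.

Lemma comp_ge N (p : {mpoly F[n]}) (lq : n.-tuple {mpoly F[k]}) :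
  (forall i, ge 1 (tnth lq i)) -> ge N p -> ge N (p \mPo lq).
Proof.
move=> hl hp; rewrite comp_mpolyEX big_seq; apply: dP_sum => m mm; apply: dPZ.
rewrite comp_mpolyX.
have h : ge (\sum_i m i) (\prod_i tnth lq i ^+ m i).
  apply: (big_ind2 (fun a (x : {mpoly F[k]}) => ge a x)).
  - by move=> ?.
  - by move=> ? ? ? ?; apply: geM.
  by move=> i _; have := geXn (k:=m i) (hl i); rewrite mul1n.
apply: geW h _; rewrite -mdegE; apply: hp; by rewrite -mcoeff_msupp.
Qed.

Lemma comp_le N (p : {mpoly F[n]}) (lq : n.-tuple {mpoly F[k]}) :
  (forall i, le 1 (tnth lq i)) -> le N p -> le N (p \mPo lq).
Proof.
move=> hl hp; rewrite comp_mpolyEX big_seq; apply: dP_sum => m mm; apply: dPZ.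
rewrite comp_mpolyX.
have h : le (\sum_i m i) (\prod_i tnth lq i ^+ m i).
  apply: (big_ind2 (fun a (x : {mpoly F[k]}) => le a x)).
  - by rewrite -mpolyC1; apply: leC.
  - by move=> ? ? ? ?; apply: leM.
  by move=> i _; have := leXn (k:=m i) (hl i); rewrite mul1n.
apply: leW h _; rewrite -mdegE; apply: hp; by rewrite -mcoeff_msupp.
Qed.

Lemma cong_mul N (a b c d : {mpoly F[k]}) :
  ge N (a - b) -> ge N (c - d) -> ge N (a * c - b * d).
Proof.
move=> h1 h2.
have -> : a * c - b * d = a * (c - d) + (a - b) * d by ring.
by apply: dPD; [apply: geMl | apply: geMr].
Qed.

Lemma comp_cong N (p : {mpoly F[n]}) (s t : n.-tuple {mpoly F[k]}) :
  (forall i, ge N (tnth s i - tnth t i)) -> ge N ((p \mPo s) - (p \mPo t)).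
Proof.
move=> h; rewrite (comp_mpolyEX p s) (comp_mpolyEX p t) -sumrB; apply: dP_sum => m _.
rewrite -scalerBr; apply: dPZ; rewrite !comp_mpolyX.
apply: (big_ind2 (fun (x y : {mpoly F[k]}) => ge N (x - y))).
- by rewrite subrr; apply: dP0.
- by move=> x1 x2 y1 y2 hx hy; apply: cong_mul.
move=> i _; elim: (m i) => [|e IH]; first by rewrite !expr0 subrr; apply: dP0.
by rewrite !exprS; apply: cong_mul.
Qed.

Lemma comp_hom d (p : {mpoly F[n]}) (c : {mpoly F[k]}) (lq : n.-tuple {mpoly F[k]}) :
  (forall m, p@_m != 0 -> mdeg m = d) ->
  p \mPo [tuple c * tnth lq i | i < n] = c ^+ d * (p \mPo lq).
Proof.
move=> hd; rewrite !comp_mpolyEX mulr_sumr big_seq [RHS]big_seq.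
apply: eq_bigr => m mm; rewrite !comp_mpolyX -scalerAr; congr (_ *: _).
rewrite (eq_bigr (fun i => c ^+ m i * tnth lq i ^+ m i)); last first.
  by move=> i _; rewrite tnth_mktuple exprMn.
rewrite big_split /= prodrXr -mdegE hd //; by rewrite -mcoeff_msupp.
Qed.
End Comp.

Lemma comp_assoc n k l (p : {mpoly F[n]}) (s : n.-tuple {mpoly F[k]})
  (t : k.-tuple {mpoly F[l]}) :
  (p \mPo s) \mPo t = p \mPo [tuple (tnth s i) \mPo t | i < n].
Proof.
rewrite [p \mPo s]comp_mpolyEX raddf_sum [RHS]comp_mpolyEX; apply: eq_bigr => m _.
rewrite /= linearZ /= !comp_mpolyX rmorph_prod; congr (_ *: _).
by apply: eq_bigr => i _; rewrite rmorphXn tnth_mktuple.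
Qed.

Lemma compX n k (f : 'I_n -> {mpoly F[k]}) i :
  'X_i \mPo [tuple f j | j < n] = f i.
Proof. by rewrite comp_mpolyXU -tnth_nth tnth_mktuple. Qed.

End Gen.


Section Ord.
Variable F : fieldType.

Lemma bigmin_le (T : eqType) (s : seq T) x (f : T -> nat) a :
  a \in s -> (\big[minn/x]_(j <- s) f j <= f a)%N.
Proof.
elim: s => // b s IH; rewrite big_cons in_cons => /orP[/eqP->|/IH h].
  exact: geq_minl.
exact: leq_trans (geq_minr _ _) h.
Qed.

Lemma bigmin_cases (T : eqType) (s : seq T) x (f : T -> nat) :
  \big[minn/x]_(j <- s) f j = x \/ exists2 a, a \in s & \big[minn/x]_(j <- s) f j = f a.
Proof.
elim: s => [|b s IH]; first by left; rewrite big_nil.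
rewrite big_cons; case: (leqP (f b) (\big[minn/x]_(j <- s) f j)) => h.
  by right; exists b; rewrite ?mem_head.
case: IH => [E2|[a ha E2]]; first by left.
by right; exists a; rewrite // in_cons ha orbT.
Qed.

Variable n : nat.
Implicit Types p q : {mpoly F[n]}.

Lemma ge_0 N : ge N (0 : {mpoly F[n]}).
Proof. by move=> m; rewrite mcoeff0 eqxx. Qed.

Lemma ge_mord p : ge (mord0 p) p.
Proof. by move=> m nz; rewrite /mord0; apply: bigmin_le; rewrite mcoeff_msupp. Qed.

Lemma mord_att p : p != 0 -> exists2 m, p@_m != 0 & mdeg m = mord0 p.
Proof.
move=> nz; case: (bigmin_cases (msupp p) (msize p) mdeg) => [E|[a ha E]]; last first.
  by exists a; rewrite -?mcoeff_msupp // /mord0 E.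
exfalso; case E2: (msupp p) => [|a s].
  by move/eqP: E2; rewrite msupp_eq0 (negbTE nz).
have ha : a \in msupp p by rewrite E2 mem_head.
have := bigmin_le (msize p) mdeg ha; rewrite E => h.
by have := msize_mdeg_lt ha; rewrite ltnNge h.
Qed.

Lemma ge_mordP p N : p != 0 -> ge N p -> (N <= mord0 p)%N.
Proof. by move=> nz h; case: (mord_att nz) => m hm <-; apply: h. Qed.

Lemma mord_le p N : p != 0 -> le N p -> (mord0 p <= N)%N.
Proof. by move=> nz h; case: (mord_att nz) => m hm <-; apply: h. Qed.

Lemma ge_all0 p : (forall N, ge N p) -> p = 0.
Proof.
move=> h; apply/eqP; apply/negPn/negP => nz.
by have := ge_mordP nz (h (mord0 p).+1); rewrite ltnn.
Qed.

Lemma mord0_0 : mord0 (0 : {mpoly F[n]}) = 0%N.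
Proof. by rewrite /mord0 msupp0 big_nil msize0. Qed.


End Ord.

Section Ord2.
Variable F : fieldType.
Lemma mord_eq n1 n2 (p : {mpoly F[n1]}) (q : {mpoly F[n2]}) : (forall N, ge N p <-> ge N q) -> mord0 p = mord0 q.
Proof.
move=> h; have [p0|np] := eqVneq p 0.
  have q0 : q = 0 by apply: ge_all0 => N; apply/h; rewrite p0; apply: ge_0.
  by rewrite p0 q0 !mord0_0.
have [q0|nq] := eqVneq q 0.
  have p0 : p = 0 by apply: ge_all0 => N; apply/h; rewrite q0; apply: ge_0.
  by rewrite p0 eqxx in np.
apply/eqP; rewrite eqn_leq; apply/andP; split.
  by apply: ge_mordP nq _; apply/h; apply: ge_mord.
by apply: ge_mordP np _; apply/h; apply: ge_mord.
Qed.
End Ord2.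


Section Blow.
Variable F : fieldType.
Variable n' : nat.
Local Notation n := n'.+1.

Definition blow : n.-tuple {mpoly F[n]} :=
  [tuple (if i == ord0 then 'X_ord0 else 'X_ord0 * 'X_i) | i < n].
Definition phi (m : 'X_{1..n}) : 'X_{1..n} :=
  [multinom (if i == ord0 then mdeg m else m i) | i < n].

Lemma mdeg_split (m : 'X_{1..n}) : mdeg m = (m ord0 + \sum_(j < n') m (lift ord0 j))%N.
Proof. by rewrite mdegE big_ord_recl. Qed.

Lemma lift0F (j : 'I_n') : (lift ord0 j == ord0 :> 'I_n) = false.
Proof. by rewrite eq_sym (negbTE (neq_lift _ _)). Qed.

Lemma blowX m : 'X_[m] \mPo blow = 'X_[phi m] :> {mpoly F[n]}.
Proof.
rewrite comp_mpolyX (mpolyXE_id _ (phi m)) !big_ord_recl /= !tnth_mktuple eqxx mnmE eqxx.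
rewrite (eq_bigr (fun j : 'I_n' => 'X_ord0 ^+ m (lift ord0 j) * 'X_(lift ord0 j) ^+ m (lift ord0 j))); last first.
  by move=> j _; rewrite tnth_mktuple lift0F exprMn.
rewrite [X in _ = _ * X](eq_bigr (fun j : 'I_n' => 'X_(lift ord0 j) ^+ m (lift ord0 j))); last first.
  by move=> j _; rewrite mnmE lift0F.
by rewrite big_split /= prodrXr mulrA -exprD -mdeg_split.
Qed.

Lemma phi_inj : injective phi.
Proof.
move=> m1 m2 E; have Ei i : phi m1 i = phi m2 i by rewrite E.
have H j : m1 (lift ord0 j) = m2 (lift ord0 j).
  by have := Ei (lift ord0 j); rewrite !mnmE lift0F.
apply/mnmP => i; case: (unliftP ord0 i) => [j ->|->]; first exact: H.
have S : (\sum_(j < n') m1 (lift ord0 j) = \sum_(j < n') m2 (lift ord0 j))%N.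
  by apply: eq_bigr => j _; apply: H.
have := Ei ord0; rewrite !mnmE eqxx !mdeg_split S => /eqP; rewrite eqn_add2r => /eqP.
done.
Qed.

Lemma coef_blow (p : {mpoly F[n]}) m : (p \mPo blow)@_(phi m) = p@_m.
Proof.
rewrite comp_mpolyEX [in RHS](mpolyE p) !(big_morph (mcoeff _) (mcoeffD _) (mcoeff0 _ _)).
apply: eq_bigr => m' _; rewrite !mcoeffZ blowX !mcoeffX.
by rewrite (inj_eq phi_inj).
Qed.

Lemma blow_inj (p q : {mpoly F[n]}) : p \mPo blow = q \mPo blow -> p = q.
Proof.
by move=> E; apply/mpolyP => m; rewrite -(coef_blow p m) -(coef_blow q m) E.
Qed.

Lemma mdeg_phi m : (mdeg (phi m) <= 2 * mdeg m)%N.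
Proof.
rewrite mdeg_split mnmE eqxx mul2n -addnn leq_add2l.
rewrite (eq_bigr (fun j : 'I_n' => m (lift ord0 j))); last by move=> j _; rewrite mnmE lift0F.
by rewrite mdeg_split leq_addl.
Qed.
End Blow.


Section Lin.
Variable F : fieldType.
Variable n : nat.

Definition lin (M : 'M[F]_n) : n.-tuple {mpoly F[n]} :=
  [tuple \sum_(j < n) M j i *: 'X_j | i < n].

Lemma lin_comp (M N : 'M[F]_n) :
  [tuple tnth (lin M) i \mPo lin N | i < n] = lin (N *m M).
Proof.
apply: eq_from_tnth => i; rewrite !tnth_mktuple raddf_sum /=.
rewrite (eq_bigr (fun j => M j i *: \sum_(k < n) N k j *: 'X_k)); last first.
  by move=> j _; rewrite linearZ /= compX.
rewrite [RHS](eq_bigr (fun k => \sum_(j < n) (N k j * M j i) *: 'X_k)); last first.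
  by move=> k _; rewrite mxE scaler_suml.
rewrite exchange_big /=; apply: eq_bigr => j _; rewrite scaler_sumr.
by apply: eq_bigr => k _; rewrite scalerA mulrC.
Qed.

Lemma lin1 : lin 1%:M = [tuple 'X_i | i < n].
Proof.
apply: eq_from_tnth => i; rewrite !tnth_mktuple (bigD1 i) //= big1 ?addr0.
  by rewrite mxE eqxx scale1r.
by move=> j /negbTE ji; rewrite mxE ji scale0r.
Qed.

Lemma comp_lin_inv (p : {mpoly F[n]}) (M : 'M[F]_n) : M \in unitmx ->
  (p \mPo lin M) \mPo lin (invmx M) = p.
Proof.
by move=> hM; rewrite comp_assoc lin_comp mulVmx // lin1 comp_mpoly_id.
Qed.

Lemma lin_ge1 (M : 'M[F]_n) i : ge 1 (tnth (lin M) i).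
Proof.
by rewrite tnth_mktuple; apply: dP_sum => j _; apply: dPZ; apply: geX.
Qed.
End Lin.

Section Three.
Variable F : fieldType.

Notation i0 := (@ord0 2).
Notation i1 := (@Ordinal 3 1 isT).
Notation i2 := (@Ordinal 3 2 isT).
Notation j0 := (@ord0 1).
Notation j1 := (@ord_max 1).

Definition Bm (q w w' : 'rV[F]_3) : 'M[F]_3 := col_mx q (col_mx w w').

Lemma sum3 (V : zmodType) (f : 'I_3 -> V) : \sum_(j < 3) f j = f i0 + f i1 + f i2.
Proof.
rewrite !big_ord_recl big_ord0 addr0 addrA; congr (f _ + f _ + f _); by apply/val_inj.
Qed.

Lemma Bq (q w w' : 'rV[F]_3) i : Bm q w w' i0 i = q 0 i.
Proof. have -> : i0 = @lshift 1 (1 + 1) 0 by apply/val_inj.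
exact: (col_mxEu q (col_mx w w') 0 i). Qed.
Lemma Bw (q w w' : 'rV[F]_3) i : Bm q w w' i1 i = w 0 i.
Proof.
have -> : i1 = @rshift 1 (1 + 1) (@lshift 1 1 0) by apply/val_inj.
exact: etrans (col_mxEd q (col_mx w w') (@lshift 1 1 0) i) (col_mxEu w w' 0 i).
Qed.
Lemma Bw' (q w w' : 'rV[F]_3) i : Bm q w w' i2 i = w' 0 i.
Proof.
have -> : i2 = @rshift 1 (1 + 1) (@rshift 1 1 0) by apply/val_inj.
exact: etrans (col_mxEd q (col_mx w w') (@rshift 1 1 0) i) (col_mxEd w w' 0 i).
Qed.

Lemma i10 : (i1 == i0) = false. Proof. by []. Qed.
Lemma i20 : (i2 == i0) = false. Proof. by []. Qed.
Lemma lj0 : lift i0 j0 = i1. Proof. by apply/val_inj. Qed.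
Lemma lj1 : lift i0 j1 = i2. Proof. by apply/val_inj. Qed.


Lemma geom (R : comRingType) (x : R) N :
  (1 + x) * \sum_(j < N) (- x) ^+ j = 1 - (- x) ^+ N.
Proof.
elim: N => [|N IH]; first by rewrite big_ord0 mulr0 expr0 subrr.
by rewrite big_ord_recr mulrDr IH exprS; ring.
Qed.

Definition sh (q : 'rV[F]_3) : 3.-tuple {mpoly F[3]} := [tuple (q 0 i)%:MP + 'X_i | i < 3].
Definition tau (w w' : 'rV[F]_3) : 3.-tuple {mpoly F[2]} :=
  [tuple 'X_j0 * (w 0 i)%:MP + 'X_j1 * (w' 0 i)%:MP | i < 3].
Definition e12 : 2.-tuple {mpoly F[3]} := [tuple 'X_(lift i0 j) | j < 2].
Definition rho (q w w' : 'rV[F]_3) : 3.-tuple {mpoly F[3]} :=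
  [tuple (q 0 i)%:MP + 'X_i1 * (w 0 i)%:MP + 'X_i2 * (w' 0 i)%:MP | i < 3].
Definition sig : 3.-tuple {mpoly F[3]} :=
  [tuple (if i == i0 then 'X_i0 else (1 + 'X_i0) * 'X_i) | i < 3].
Definition tauN N : 3.-tuple {mpoly F[3]} :=
  [tuple (if i == i0 then 'X_i0 else 'X_i * \sum_(j < N) (- 'X_i0) ^+ j) | i < 3].

Lemma chart_tau (G : {mpoly F[3]}) (q w w' : 'rV[F]_3) : chart_eq G q w w' = (G \mPo sh q) \mPo tau w w'.
Proof.
rewrite comp_assoc /chart_eq; congr (G \mPo _); apply: eq_from_tnth => i.
by rewrite !tnth_mktuple rmorphD /= comp_mpolyC compX addrA.
Qed.

Lemma chart_e12 (G : {mpoly F[3]}) (q w w' : 'rV[F]_3) : chart_eq G q w w' \mPo e12 = G \mPo rho q w w'.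
Proof.
rewrite comp_assoc; congr (G \mPo _); apply: eq_from_tnth => i.
rewrite !tnth_mktuple !rmorphD !rmorphM /= !comp_mpolyC !compX.
by rewrite lj0 lj1.
Qed.

Lemma P_sig (G : {mpoly F[3]}) d (q w w' : 'rV[F]_3) : (forall m, G@_m != 0 -> mdeg m = d) ->
  ((G \mPo sh q) \mPo lin (Bm q w w')) \mPo sig
  = (1 + 'X_i0) ^+ d * (chart_eq G q w w' \mPo e12).
Proof.
move=> hd; rewrite chart_e12 -(comp_hom _ _ hd) !comp_assoc; congr (G \mPo _).
apply: eq_from_tnth => i; rewrite !tnth_mktuple.
rewrite (comp_mpolyD _ ((q 0 i)%:MP)) comp_mpolyC compX tnth_mktuple raddf_sum sum3 /=.
rewrite !linearZ /= !compX eqxx i10 i20 Bq Bw Bw' -!mul_mpolyC.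
ring.
Qed.

Lemma K (G : {mpoly F[3]}) d (q w w' : 'rV[F]_3) :
  (forall m, G@_m != 0 -> mdeg m = d) -> Bm q w w' \in unitmx ->
  forall N, ge N (G \mPo sh q) <-> ge N (chart_eq G q w w').
Proof.
move=> hd hB N; split => h.
  rewrite chart_tau; apply: comp_ge => // i; rewrite tnth_mktuple.
  by apply: dPD; apply: geMr; apply: geX.
set A := G \mPo sh q.
set P := A \mPo lin (Bm q w w').
suff hP : ge N P.
  rewrite -(comp_lin_inv A hB); apply: comp_ge hP => i; exact: lin_ge1.
have h1 : ge N ((P \mPo sig) \mPo tauN N).
  apply: comp_ge.
    move=> i; rewrite tnth_mktuple; case: ifP => _; first exact: geX.
    by apply: geMr; apply: geX.
  rewrite /P /A (P_sig q w w' hd); apply: geMl; apply: comp_ge h => j.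
  by rewrite tnth_mktuple; apply: geX.
have h2 : ge N (((P \mPo sig) \mPo tauN N) - (P \mPo [tuple 'X_i | i < 3])).
  rewrite comp_assoc; apply: comp_cong => i; rewrite !tnth_mktuple.
  case: (eqVneq i i0) => [->|ne].
    by rewrite compX ?eqxx subrr; apply: ge_0.
  rewrite rmorphM /= rmorphD /= rmorph1 !compX ?eqxx (negbTE ne).
  rewrite mulrCA geom.
  set e := (- 'X_i0) ^+ N.
  have -> : 'X_i * (1 - e) - 'X_i = - ('X_i * e) by ring.
  apply: dPN; apply: geMl; rewrite /e.
  by have := geXn (k:=N) (dPN (geX (i:=i0))); rewrite mul1n.
rewrite comp_mpoly_id in h2.
have -> : P = ((P \mPo sig) \mPo tauN N) - (((P \mPo sig) \mPo tauN N) - P).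
  by rewrite opprB addrC subrK.
exact: dPB h1 h2.
Qed.

Lemma pmultE (G : {mpoly F[3]}) q : pmult G q = mord0 (G \mPo sh q).
Proof. by []. Qed.

Lemma part2a (G : {mpoly F[3]}) d (q w w' : 'rV[F]_3) :
  (forall m, G@_m != 0 -> mdeg m = d) -> Bm q w w' \in unitmx ->
  multD_off G q w w' = pmult G q.
Proof.
move=> hd hB; rewrite pmultE /multD_off; apply: mord_eq => N.
by apply: iff_sym; apply: K hd hB N.
Qed.

Lemma part2b (G : {mpoly F[3]}) d (q : 'rV[F]_3) :
  (forall m, G@_m != 0 -> mdeg m = d) -> G != 0 ->
  (pmult G q <= d)%N.
Proof.
move=> hd nG; rewrite pmultE; apply: mord_le.
  apply: contraNneq nG => A0.
  have <- : (G \mPo sh q) \mPo [tuple 'X_i - (q 0 i)%:MP | i < 3] = G.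
    rewrite comp_assoc -[RHS]comp_mpoly_id; congr (G \mPo _).
    apply: eq_from_tnth => i; rewrite !tnth_mktuple comp_mpolyD comp_mpolyC compX.
    by rewrite addrC subrK.
  by rewrite A0 comp_mpoly0.
apply: comp_le.
  move=> i; rewrite tnth_mktuple; apply: dPD; last exact: leX.
  move=> m hm; have := leC (n:=3) (c:=q 0 i) hm; rewrite leqn0 => /eqP -> //.
by move=> m /hd ->.
Qed.

Lemma blowup_blow (G : {mpoly F[3]}) (p w w' : 'rV[F]_3) :
  blowup_eq G p w w' = chart_eq G p w w' \mPo blow F 1.
Proof.
rewrite /chart_eq comp_assoc /blowup_eq; congr (G \mPo _).
apply: eq_from_tnth => i; rewrite !tnth_mktuple !comp_mpolyD !comp_mpolyC.
rewrite !rmorphM /= !comp_mpolyC !compX /=.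
by [].
Qed.

Lemma part1 (G : {mpoly F[3]}) d (p w w' : 'rV[F]_3) :
  (forall m, G@_m != 0 -> mdeg m = d) -> Bm p w w' \in unitmx ->
  (mord0 (blowup_eq G p w w') <= 2 * pmult G p)%N.
Proof.
move=> hd hB; rewrite -(part2a hd hB) /multD_off blowup_blow.
set C := chart_eq G p w w'.
have [->|nC] := eqVneq C 0; first by rewrite comp_mpoly0 mord0_0.
case: (mord_att nC) => m hm <-.
have h : (C \mPo blow F 1)@_(phi m) != 0 by rewrite coef_blow.
apply: leq_trans (ge_mord h) _.
exact: mdeg_phi.
Qed.

End Three.


Notation i0 := (@ord0 2).
Notation i1 := (@Ordinal 3 1 isT).
Notation i2 := (@Ordinal 3 2 isT).
Notation j0 := (@ord0 1).
Notation j1 := (@ord_max 1).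

Lemma prod_const_seq (R : comRingType) (T : Type) (r : seq T) (x : R) :
  \prod_(z <- r) x = x ^+ size r.
Proof. by elim: r => [|a r IH]; rewrite ?big_nil ?expr0 // big_cons IH exprS. Qed.

Lemma prod_nseq (R : comRingType) (T : Type) n (x : T) (f : T -> R) :
  \prod_(a <- nseq n x) f a = f x ^+ n.
Proof. by elim: n => [|n IH]; rewrite ?big_nil ?expr0 // big_cons IH exprS. Qed.

Lemma mdeg_ge n (m : 'X_{1..n}) i : (m i <= mdeg m)%N.
Proof. by rewrite mdegE (bigD1 i) //= leq_addr. Qed.

Lemma prod2 (R : comRingType) (f : 'I_2 -> R) : \prod_(i < 2) f i = f j0 * f j1.
Proof.
rewrite !big_ord_recl big_ord0 mulr1; congr (f _ * f _); by apply/val_inj.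
Qed.

Lemma j10 : (j1 == j0) = false. Proof. by []. Qed.

Section Lines.
Variable F : fieldType.

Lemma chart_le (G : {mpoly F[3]}) d (q w w' : 'rV[F]_3) :
  le d G -> le d (chart_eq G q w w').
Proof.
move=> hG; apply: comp_le hG => i; rewrite tnth_mktuple.
apply: dPD; first apply: dPD.
- move=> m hm; have := leC (n:=2) (c:=q 0 i) hm; rewrite leqn0 => /eqP -> //.
- by have := leM (leX (n:=2) (i:=j0)) (leC (c:=w 0 i)); rewrite addn0.
- by have := leM (leX (n:=2) (i:=j1)) (leC (c:=w' 0 i)); rewrite addn0.
Qed.

Lemma Ghat_eq (G : {mpoly F[3]}) d (q w w' : 'rV[F]_3) :
  (forall m, G@_m != 0 -> mdeg m = d) ->
  (forall m, (chart_eq G q w w')@_m != 0 -> mdeg m = d) ->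
  G \mPo lin (Bm q w w') = chart_eq G q w w' \mPo e12 F.
Proof.
move=> hd hC; apply: (@blow_inj F 2).
rewrite comp_assoc [RHS]comp_assoc.
have -> : [tuple tnth (lin (Bm q w w')) i \mPo blow F 2 | i < 3]
        = [tuple 'X_i0 * tnth (rho q w w') i | i < 3].
  apply: eq_from_tnth => i; rewrite !tnth_mktuple raddf_sum sum3 /= !linearZ /= !compX.
  rewrite ?eqxx i10 i20 Bq Bw Bw' -!mul_mpolyC; ring.
have -> : [tuple tnth (e12 F) j \mPo blow F 2 | j < 2] = [tuple 'X_i0 * tnth (e12 F) j | j < 2].
  by apply: eq_from_tnth => j; rewrite !tnth_mktuple compX lift0F.
by rewrite (comp_hom _ _ hd) (comp_hom _ _ hC) chart_e12.
Qed.

End Lines.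

Section Factor.
Variable F : closedFieldType.

Definition iota (p : {poly F}) : {mpoly F[2]} := (map_poly (@mpolyC 2 F) p).['X_j1].

Lemma binary_factor (C : {mpoly F[2]}) d : C != 0 ->
  (forall m, C@_m != 0 -> mdeg m = d) ->
  exists c (r : seq F), (size r <= d)%N /\
    C = c *: ('X_j0 ^+ (d - size r) * \prod_(z <- r) ('X_j1 - z *: 'X_j0)).
Proof.
move=> nC hC.
set D := C \mPo [tuple (if i == j0 then 1 else 'X_i) | i < 2].
have hCb : C \mPo blow F 1 = 'X_j0 ^+ d * D.
  rewrite /D -(comp_hom _ _ hC); congr (C \mPo _); apply: eq_from_tnth => i.
  by rewrite !tnth_mktuple; case: ifP => _; rewrite ?mulr1.
set P : {poly F} := \sum_(m <- msupp C) C@_m *: 'X^(m j1).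
have hD : iota P = D.
  rewrite /iota /D comp_mpolyEX rmorph_sum horner_sum /=; apply: eq_bigr => m _.
  rewrite map_polyZ map_polyXn hornerZ hornerXn comp_mpolyX prod2 !tnth_mktuple /=.
  by rewrite expr1n mul1r mul_mpolyC.
case: (closed_field_poly_normal P) => r hr.
have hPnz : P != 0.
  apply: contraNneq nC => P0; apply/eqP; apply: (@blow_inj F 1).
  by rewrite comp_mpoly0 hCb -hD P0 /iota rmorph0 horner0 mulr0.
have hsz : (size r <= d)%N.
  have : (size P <= d.+1)%N.
    apply/leq_sizeP => j hj; rewrite /P coef_sum big_seq big1 // => m hm.
    rewrite coefZ coefXn.
    have hmd : (m j1 <= d)%N by rewrite -(hC m) ?mdeg_ge // -mcoeff_msupp.
    case: eqP => [E|_]; last by rewrite mulr0.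
    by move: hj; rewrite E ltnNge hmd.
  by rewrite hr size_scale ?lead_coef_eq0 // size_prod_XsubC.
exists (lead_coef P), r; split => //.
apply: (@blow_inj F 1); rewrite hCb -hD {1}hr.
rewrite /iota map_polyZ hornerZ rmorph_prod horner_prod /=.
rewrite linearZ /= rmorphM rmorphXn rmorph_prod /= compX /=.
under eq_bigr do rewrite map_polyXsubC hornerXsubC.
rewrite [in RHS](eq_bigr (fun z => 'X_j0 * ('X_j1 - z%:MP))); last first.
  move=> z _; rewrite rmorphB /= linearZ /= !compX /= -mul_mpolyC; ring.
rewrite big_split /= prod_const_seq.
set Pi := \prod_(i <- r) _.
have -> : 'X_j0 ^+ (d - size r) * ('X_j0 ^+ size r * Pi) = 'X_j0 ^+ d * Pi.
  by rewrite mulrA -exprD subnK.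
rewrite -mul_mpolyC; ring.
Qed.
End Factor.

Section LinesMain.
Variable F : closedFieldType.

Lemma dotB (B : 'M[F]_3) i j : B \in unitmx ->
  \sum_(k < 3) B i k * invmx B k j = (i == j)%:R.
Proof.
move=> hB; have := congr1 (fun M : 'M[F]_3 => M i j) (mulmxV hB).
by rewrite /= !mxE.
Qed.

Lemma linformB (a b : 'rV[F]_3) z :
  linform (a - z *: b) = linform a - z *: linform b.
Proof.
rewrite /linform scaler_sumr -sumrB; apply: eq_bigr => k _.
by rewrite !mxE scalerBl scalerA.
Qed.

Lemma lines (G : {mpoly F[3]}) d (q w w' : 'rV[F]_3) :
  (0 < d)%N -> (forall m, G@_m != 0 -> mdeg m = d) -> Bm q w w' \in unitmx ->
  mord0 (chart_eq G q w w') = d -> union_of_lines_through G q.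
Proof.
move=> d0 hd hB hm.
set C := chart_eq G q w w'.
have nC : C != 0.
  by apply: contraTneq d0 => C0; rewrite -hm -/C C0 mord0_0.
have hC : forall m, C@_m != 0 -> mdeg m = d.
  move=> m hm0; apply/eqP; rewrite eqn_leq; apply/andP; split.
    apply: (chart_le (G:=G) (q:=q) (w:=w) (w':=w')) hm0.
    by move=> m' /hd ->.
  by rewrite -hm; apply: ge_mord.
set Bi := invmx (Bm q w w').
have hG : G = C \mPo [tuple tnth (lin Bi) (lift i0 j) | j < 2].
  rewrite -{1}(comp_lin_inv G hB) (Ghat_eq hd hC) comp_assoc; congr (C \mPo _).
  by apply: eq_from_tnth => j; rewrite !tnth_mktuple compX.
case: (binary_factor nC hC) => c [r [hr hCf]].
set u1 : 'rV[F]_3 := \row_k Bi k i1.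
set u2 : 'rV[F]_3 := \row_k Bi k i2.
have l1 : linform u1 = tnth (lin Bi) i1.
  by rewrite /linform tnth_mktuple; apply: eq_bigr => k _; rewrite mxE.
have l2 : linform u2 = tnth (lin Bi) i2.
  by rewrite /linform tnth_mktuple; apply: eq_bigr => k _; rewrite mxE.
have key : forall (a : 'rV[F]_3) (c1 c2 : F),
    (forall k, a 0 k = c1 * Bi k i1 + c2 * Bi k i2) -> forall i,
    \sum_k Bm q w w' i k * a 0 k = c1 * (i == i1)%:R + c2 * (i == i2)%:R.
  move=> a c1 c2 ha i.
  rewrite (eq_bigr (fun k => c1 * (Bm q w w' i k * Bi k i1) + c2 * (Bm q w w' i k * Bi k i2))); last first.
    by move=> k _; rewrite ha; ring.
  by rewrite big_split /= -!mulr_sumr !dotB.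
have good : forall (a : 'rV[F]_3) c1 c2,
    (forall k, a 0 k = c1 * Bi k i1 + c2 * Bi k i2) -> (c1 != 0) || (c2 != 0) ->
    a != 0 /\ \sum_(i < 3) a 0 i * q 0 i = 0.
  move=> a c1 c2 ha hc; split.
    apply: contraTneq hc => a0.
    have k1 := key a c1 c2 ha i1; have k2 := key a c1 c2 ha i2.
    have z0 : forall i, \sum_k Bm q w w' i k * a 0 k = 0.
      by move=> i; apply: big1 => k _; rewrite a0 [X in _ * X]mxE mulr0.
    rewrite z0 in k1; rewrite z0 in k2.
    have i12 : (i1 == i2) = false by [].
    have i21 : (i2 == i1) = false by [].
    rewrite eqxx i12 mulr1 mulr0 addr0 in k1.
    rewrite eqxx i21 mulr1 mulr0 add0r in k2.
    by rewrite -k1 -k2 eqxx.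
  have k0 := key a c1 c2 ha i0.
  have e1 : (i0 == i1) = false by [].
  have e2 : (i0 == i2) = false by [].
  rewrite e1 e2 !mulr0 addr0 in k0; rewrite -[RHS]k0.
  by apply: eq_bigr => k _; rewrite Bq mulrC.
exists c, (nseq (d - size r) u1 ++ [seq u2 - z *: u1 | z <- r]); split.
  move=> a; rewrite mem_cat => /orP[].
    rewrite mem_nseq => /andP[_ /eqP ->]; apply: (good u1 1 0).
      by move=> k; rewrite mxE mul1r mul0r addr0.
    by rewrite oner_eq0.
  move=> /mapP [z _ ->]; apply: (good _ (- z) 1).
    by move=> k; rewrite !mxE; ring.
  by rewrite oner_eq0 orbT.
rewrite hG hCf linearZ /= rmorphM rmorphXn rmorph_prod /= !compX lj0.
rewrite big_cat /= big_map prod_nseq l1; congr (_ *: (_ * _)).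
apply: eq_bigr => z _; rewrite linformB l1 l2 rmorphB /= linearZ /= !compX lj0 lj1.
by [].
Qed.
End LinesMain.

Unset Implicit Arguments.

Theorem lemma2 (R : realType) (r : nat) :
  (1 <= r <= 8)%N ->
  (* "general points": the statement holds for all configurations M of r points
     (rows of M) outside the zero locus of some nonzero polynomial F *)
  exists F : {mpoly R[i][r * 3]}, F != 0 /\
  forall M : 'M[R[i]]_(r, 3), F.@[mxvec M 0] != 0 ->
  forall (k : nat) (G : {mpoly R[i][3]}),
    (0 < k)%N -> G != 0 -> homog3 (3 * k) G ->
    (forall j : 'I_r, (k <= pmult G (row j M))%N) ->
    (* Q on the exceptional curve E_j *)
    (forall (j : 'I_r) (w w' : 'rV[R[i]]_3),
        row_free (col_mx (row j M) (col_mx w w')) ->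
        (multD_exc k G (row j M) w w' <= 2 * (pmult G (row j M))%:Z - k%:Z)%R)
    /\
    (* Q not on any exceptional curve, f(Q) = [q] *)
    (forall q w w' : 'rV[R[i]]_3,
        (forall j : 'I_r, row_free (col_mx q (row j M))) ->
        row_free (col_mx q (col_mx w w')) ->
        multD_off G q w w' = pmult G q /\
        (pmult G q <= 3 * k)%N /\
        ((multD_off G q w w' = 3 * k)%N -> union_of_lines_through G q)).
Proof.
move=> _; exists 1; split; first exact: oner_neq0.
move=> M _ k G k0 nG hG _.
have hd : forall m, G@_m != 0 -> mdeg m = (3 * k)%N.
  move=> m hm; apply/eqP; move/allP: hG; apply; by rewrite mcoeff_msupp.
split.
  move=> j w w' hrf.
  have hB : Bm (row j M) w w' \in unitmx by rewrite -row_free_unit; exact: hrf.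
  have := part1 hd hB; rewrite /multD_exc => h; lia.
move=> q w w' _ hrf.
have hB : Bm q w w' \in unitmx by rewrite -row_free_unit; exact: hrf.
split; first exact: part2a hd hB.
split; first exact: part2b q hd nG.
move=> E; apply: (lines (d := (3 * k)%N)) hd hB E.
by rewrite muln_gt0.
Qed.
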